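(* Let $\Sigma\subset\mathbb P^4$ be a smooth rational normal cubic scroll. Then there exist lines $\ell\subset\mathbb P^4$ with $\ell\cap\Sigma=\emptyset$ such that the branch curve of the projection $\pi:\Sigma\to\mathbb P^2$ from $\ell$ is the union of an irreducible cuspidal cubic and the tangent line to it at its unique flex.
   Context: The projection from a line disjoint from $\Sigma$ is a finite degree $3$ morphism $\Sigma\to\mathbb P^2$; its branch curve is its branch divisor. *)

(* Defs.v *)
From HB Require Import structures.
From mathcomp Require Import all_boot all_order all_algebra.
From mathcomp Require Import mpoly.
Set Implicit Arguments. Unset Strict Implicit. Unset Printing Implicit Defensive.
Import Order.TTheory GRing.Theory.
Local Open Scope ring_scope.

Section Defs.
Variable K : fieldType.

(* Points of P^n are nonzero row vectors of K^(n+1), up to nonzero scalars.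
   Subsets of P^n are represented by cones (predicates on vectors). *)

Definition std_scroll (x : 'rV[K]_5) : Prop :=
  exists s t u v : K, (s != 0 \/ t != 0) /\ (u != 0 \/ v != 0) /\
    x = \row_(i < 5) [:: s * u; t * u; s ^+ 2 * v; s * t * v; t ^+ 2 * v]`_i.

Definition smooth_cubic_scroll (S : 'rV[K]_5 -> Prop) : Prop :=
  exists A : 'M[K]_5, A \in unitmx /\ forall x, S x <-> std_scroll (x *m A).

(** A line of P^4 is the row space of a rank-2 matrix L : 'M_(2,5). *)
Definition is_line (L : 'M[K]_(2,5)) : Prop := \rank L = 2%N.

Definition line_disjoint (L : 'M[K]_(2,5)) (S : 'rV[K]_5 -> Prop) : Prop :=
  forall x : 'rV[K]_5, x != 0 -> (x <= L)%MS -> ~ S x.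

(** P : 'M_(5,3) represents a projection P^4 --> P^2 from the line L:
    x |-> x *m P, with kernel exactly the 2-dimensional space L. *)
Definition projection_from (L : 'M[K]_(2,5)) (P : 'M[K]_(5,3)) : Prop :=
  (kermx P == L)%MS.

(** Branch locus of pi = P restricted to S (a degree-3 finite map): the points
    q of P^2 over which the fibre of pi has fewer than 3 distinct points.
    (Fibre points are normalised by x *m P = q, so distinct vectors are
    distinct points of P^4.) *)
Definition branch_point (S : 'rV[K]_5 -> Prop) (P : 'M[K]_(5,3))
    (q : 'rV[K]_3) : Prop :=
  q != 0 /\
  ~ (exists x1 x2 x3 : 'rV[K]_5,
        [/\ S x1, S x2 & S x3] /\
        [/\ x1 *m P = q, x2 *m P = q & x3 *m P = q] /\
        [/\ x1 != x2, x1 != x3 & x2 != x3]).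

Definition ev (F : {mpoly K[3]}) (q : 'rV[K]_3) : K := meval (fun i => q 0 i) F.

Definition grad (F : {mpoly K[3]}) (p : 'rV[K]_3) : 'rV[K]_3 :=
  \row_i ev (F^`M(i)) p.

Definition hessian (F : {mpoly K[3]}) (p : 'rV[K]_3) : 'M[K]_3 :=
  \matrix_(i, j) ev ((F^`M(i))^`M(j)) p.

Definition dot3 (u v : 'rV[K]_3) : K := (u *m v^T) 0 0.

Definition irreducible_mpoly (F : {mpoly K[3]}) : Prop :=
  (1 < msize F)%N /\
  forall G H : {mpoly K[3]}, F = G * H -> (msize G <= 1)%N \/ (msize H <= 1)%N.

Definition singular_point (F : {mpoly K[3]}) (p : 'rV[K]_3) : Prop :=
  p != 0 /\ ev F p = 0 /\ grad F p = 0.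

(** A cusp of a plane cubic: a double point with a single (double) tangent,
    i.e. the tangent cone (the Hessian quadratic form) has rank 1. *)
Definition cusp (F : {mpoly K[3]}) (p : 'rV[K]_3) : Prop :=
  singular_point F p /\ \rank (hessian F p) = 1%N.

Definition cuspidal_cubic (F : {mpoly K[3]}) : Prop :=
  F \is 3.-homog /\ irreducible_mpoly F /\ exists p, cusp F p.

(** A flex: a smooth point p of F = 0 whose tangent line { q | grad F p . q = 0 }
    meets the curve at p with multiplicity >= 3, i.e. F(p + t v) = O(t^3)
    for every v on the tangent line. *)
Definition flex (F : {mpoly K[3]}) (p : 'rV[K]_3) : Prop :=
  p != 0 /\ ev F p = 0 /\ grad F p != 0 /\
  forall v : 'rV[K]_3, dot3 (grad F p) v = 0 -> dot3 (v *m hessian F p) v = 0.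

End Defs.

(* Main.v *)
Require Import Defs.
From HB Require Import structures.
From mathcomp Require Import all_boot all_order all_algebra.
From mathcomp Require Import mpoly.
From mathcomp Require Import ring lra zify.
Import GRing.Theory.
Local Open Scope ring_scope.
Set Implicit Arguments. Unset Strict Implicit. Unset Printing Implicit Defensive.

Definition vec5 (K : nzRingType) (a b c d e : K) : 'rV[K]_5 :=
  \row_(i < 5) [:: a; b; c; d; e]`_i.

Definition j0 : 'I_5 := @Ordinal 5 0 isT.
Definition j1 : 'I_5 := @Ordinal 5 1 isT.
Definition j2 : 'I_5 := @Ordinal 5 2 isT.
Definition j3 : 'I_5 := @Ordinal 5 3 isT.
Definition j4 : 'I_5 := @Ordinal 5 4 isT.

Definition fib (K : fieldType) (x y z : K) (Y : 'rV[K]_5) : Prop :=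
  std_scroll Y /\ - Y 0 j4 = x /\ Y 0 j1 + Y 0 j2 = y /\ - Y 0 j0 = z.

Definition gv (K : fieldType) (x y s : K) : 'rV[K]_5 :=
  vec5 (s * (y + x * s ^+ 2)) (y + x * s ^+ 2) (- (x * s ^+ 2)) (- (x * s)) (- x).

Lemma vec5E (K : nzRingType) (a b c d e : K) :
  [/\ vec5 a b c d e 0 j0 = a, vec5 a b c d e 0 j1 = b, vec5 a b c d e 0 j2 = c,
      vec5 a b c d e 0 j3 = d & vec5 a b c d e 0 j4 = e].
Proof. by rewrite !mxE. Qed.

Lemma fib_x0 (K : fieldType) (y z : K) Y : fib 0 y z Y ->
  Y = vec5 (- z) y 0 0 0 \/ Y = vec5 (- z) 0 y 0 0.
Proof.
case=> [[s [t [u [v [_ [_ ->]]]]]]].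
rewrite !mxE /= => -[h4 [h12 h0]].
move/eqP: h4; rewrite oppr_eq0 mulf_eq0 expf_eq0 /= => /orP [/eqP t0|/eqP v0].
  right; rewrite -h0 -h12 t0; congr (vec5 _ _ _ _ _) => /=; ring.
left; rewrite -h0 -h12 v0; congr (vec5 _ _ _ _ _) => /=; ring.
Qed.

Lemma fib_xn0 (K : fieldType) (x y z : K) Y : x != 0 -> fib x y z Y ->
  exists s, Y = gv x y s /\ x * s ^+ 3 + y * s + z = 0.
Proof.
move=> xn0 [[s [t [u [v [_ [_ ->]]]]]]].
rewrite !mxE /= => -[h4 [h12 h0]].
have tn0 : t != 0.
  apply: contra xn0 => /eqP t0; rewrite -h4 t0; apply/eqP; ring.
exists (s / t); split; last first.
  rewrite -h4 -h12 -h0; field; exact: tn0.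
unfold gv; rewrite -h4 -h12; congr (vec5 _ _ _ _ _); by field; rewrite ?tn0.
Qed.

Lemma gv_fib (K : fieldType) (x y z s : K) : x != 0 ->
  x * s ^+ 3 + y * s + z = 0 -> fib x y z (gv x y s).
Proof.
move=> xn0 hr; split.
  exists s, 1, (y + x * s ^+ 2), (- x); split; first by right; exact: oner_neq0.
  split; first by right; rewrite oppr_eq0.
  change (gv x y s = vec5 (s * (y + x * s ^+ 2)) (1 * (y + x * s ^+ 2))
    (s ^+ 2 * (- x)) (s * 1 * (- x)) (1 ^+ 2 * (- x))).
  unfold gv; congr (vec5 _ _ _ _ _); ring.
rewrite !mxE /=; split; first ring.
split; first ring.
by rewrite -[z]subr0 -hr; ring.
Qed.

Lemma gv_inj (K : fieldType) (x y s1 s2 : K) : x != 0 ->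
  gv x y s1 = gv x y s2 -> s1 = s2.
Proof.
move=> xn0 h; have := congr1 (fun M : 'rV[K]_5 => M 0 j3) h.
rewrite !mxE /= => /eqP.
rewrite eqr_opp => /eqP /(mulfI xn0); done.
Qed.

Lemma natK0 (K : fieldType) (hK : [pchar K] =i pred0) (n : nat) :
  (n != 0)%N -> n%:R != 0 :> K.
Proof. by move=> hn; rewrite (pcharf0P K).1. Qed.

Lemma disc3 (K : fieldType) (x y z a b c : K) : x != 0 -> a != b -> a != c -> b != c ->
  x * a ^+ 3 + y * a + z = 0 -> x * b ^+ 3 + y * b + z = 0 ->
  x * c ^+ 3 + y * c + z = 0 -> 4 * y ^+ 3 + 27 * x * z ^+ 2 != 0.
Proof.
move=> xn0 ab ac bc ha hb hc.
have eab : x * (a ^+ 2 + a * b + b ^+ 2) + y = 0.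
  apply: (mulfI (_ : a - b != 0)); first by rewrite subr_eq0.
  rewrite mulr0 -[0](subrr 0) -{1}ha -hb; ring.
have eac : x * (a ^+ 2 + a * c + c ^+ 2) + y = 0.
  apply: (mulfI (_ : a - c != 0)); first by rewrite subr_eq0.
  rewrite mulr0 -[0](subrr 0) -{1}ha -hc; ring.
have hsum : a + b + c = 0.
  apply: (mulfI (_ : x * (b - c) != 0)); first by rewrite mulf_neq0 // subr_eq0.
  rewrite mulr0 -[0](subrr 0) -{1}eab -eac; ring.
have hc' : c = - a - b by rewrite -[c]subr0 -hsum; ring.
have hy : y = - (x * (a ^+ 2 + a * b + b ^+ 2)) by rewrite -[y]subr0 -eab; ring.
have hz : z = - (x * a ^+ 3) - y * a by rewrite -[z]subr0 -ha; ring.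
have -> : 4 * y ^+ 3 + 27 * x * z ^+ 2 = - (x ^+ 3 * ((a - b) * (a - c) * (b - c)) ^+ 2).
  rewrite hz hy hc'; ring.
by rewrite oppr_eq0 mulf_neq0 ?expf_neq0 // !mulf_neq0 // subr_eq0.
Qed.

Lemma core (K : closedFieldType) (hK : [pchar K] =i pred0) (x y z : K) :
  (exists Y1 Y2 Y3, [/\ fib x y z Y1, fib x y z Y2 & fib x y z Y3] /\
     [/\ Y1 != Y2, Y1 != Y3 & Y2 != Y3]) <->
  (x != 0 /\ 4 * y ^+ 3 + 27 * x * z ^+ 2 != 0).
Proof.
split.
  move=> [Y1 [Y2 [Y3 [[f1 f2 f3] [d12 d13 d23]]]]].
  have [x0|xn0] := eqVneq x 0.
    exfalso; rewrite x0 in f1 f2 f3.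
    have e1 := fib_x0 f1; have e2 := fib_x0 f2; have e3 := fib_x0 f3.
    move: d12 d13 d23.
    by case: e1 => ->; case: e2 => ->; case: e3 => ->; rewrite ?eqxx.
  split => //.
  have [a [e1 ha]] := fib_xn0 xn0 f1.
  have [b [e2 hb]] := fib_xn0 xn0 f2.
  have [c [e3 hc]] := fib_xn0 xn0 f3.
  rewrite e1 e2 e3 in d12 d13 d23.
  apply: (disc3 xn0 _ _ _ ha hb hc).
  - by apply: contra d12 => /eqP ->.
  - by apply: contra d13 => /eqP ->.
  - by apply: contra d23 => /eqP ->.
move=> [xn0 hD].
have n2 : (2 : K) != 0 by apply: natK0.
have n3 : (3 : K) != 0 by apply: natK0.
have [r1 hr1] := @solve_monicpoly K 3 (fun i => [:: - (z / x); - (y / x); 0]`_i) isT.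
move: hr1; rewrite !big_ord_recl big_ord0 /= => hr1.
have c1 : x * r1 ^+ 3 + y * r1 + z = 0.
  rewrite hr1 /bump /=; field; exact: xn0.
have hz : z = - (x * r1 ^+ 3) - y * r1 by rewrite -[z]subr0 -c1; ring.
pose D := - (x * (3 * x * r1 ^+ 2 + 4 * y)).
have hfac : 4 * y ^+ 3 + 27 * x * z ^+ 2 =
   (3 * x * r1 ^+ 2 + y) ^+ 2 * (3 * x * r1 ^+ 2 + 4 * y) by rewrite hz; ring.
have hA : 3 * x * r1 ^+ 2 + y != 0.
  by apply: contra hD => /eqP h; rewrite hfac h expr0n /= mul0r.
have hB : 3 * x * r1 ^+ 2 + 4 * y != 0.
  by apply: contra hD => /eqP h; rewrite hfac h mulr0.
have [w hw] := @solve_monicpoly K 2 (fun i => [:: D; 0]`_i) isT.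
move: hw; rewrite !big_ord_recl big_ord0 /= => hw0.
have hw : w ^+ 2 = D by rewrite hw0 /bump /=; ring.
have Dn0 : D != 0 by rewrite /D oppr_eq0 mulf_neq0.
have wn0 : w != 0 by apply: contra Dn0 => /eqP w0; rewrite -hw w0 expr0n.
pose r2 := (- (x * r1) + w) / (2 * x).
pose r3 := (- (x * r1) - w) / (2 * x).
have root2 : forall r, r = (- (x * r1) + w) / (2 * x) \/ r = (- (x * r1) - w) / (2 * x) ->
    x * r ^+ 3 + y * r + z = 0.
  move=> r hr.
  have -> : x * r ^+ 3 + y * r + z = (r - r1) * (x * r ^+ 2 + x * r1 * r + x * r1 ^+ 2 + y).
    rewrite hz; ring.
  have -> : x * r ^+ 2 + x * r1 * r + x * r1 ^+ 2 + y = (w ^+ 2 - D) / (4 * x).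
    have n4 : (4 : K) != 0 by apply: natK0.
    by case: hr => ->; rewrite /D; field; rewrite n4 xn0.
  by rewrite hw subrr mul0r mulr0.
have d12 : r1 != r2.
  apply/eqP => h.
  have hw3 : w = 3 * x * r1.
    have : w = 2 * x * r2 + x * r1 by rewrite /r2; field; rewrite n2 xn0.
    by rewrite -h => ->; ring.
  move: hw; rewrite hw3 /D => /eqP; rewrite -subr_eq0 => /eqP h2.
  have : 4 * x * (3 * x * r1 ^+ 2 + y) = 0 by rewrite -h2; ring.
  by apply/eqP; rewrite !mulf_neq0 // natK0.
have d13 : r1 != r3.
  apply/eqP => h.
  have hw3 : w = - (3 * x * r1).
    have : w = - (2 * x * r3 + x * r1) by rewrite /r3; field; rewrite n2 xn0.
    by rewrite -h => ->; ring.
  move: hw; rewrite hw3 /D => /eqP; rewrite -subr_eq0 => /eqP h2.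
  have : 4 * x * (3 * x * r1 ^+ 2 + y) = 0 by rewrite -h2; ring.
  by apply/eqP; rewrite !mulf_neq0 // natK0.
have d23 : r2 != r3.
  apply/eqP => h.
  have : w = x * (r2 - r3) by rewrite /r2 /r3; field; rewrite n2 xn0.
  by rewrite h subrr mulr0; apply/eqP.
exists (gv x y r1), (gv x y r2), (gv x y r3); split; [split|split].
- exact: gv_fib.
- by apply: gv_fib => //; apply: root2; left.
- by apply: gv_fib => //; apply: root2; right.
- by apply: contra d12 => /eqP /(gv_inj xn0) ->.
- by apply: contra d13 => /eqP /(gv_inj xn0) ->.
- by apply: contra d23 => /eqP /(gv_inj xn0) ->.
Qed.

Definition i0 : 'I_3 := @Ordinal 3 0 isT.
Definition i1 : 'I_3 := @Ordinal 3 1 isT.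
Definition i2 : 'I_3 := @Ordinal 3 2 isT.

Lemma sum3 (R : nmodType) (f : 'I_3 -> R) : \sum_(i < 3) f i = f i0 + f i1 + f i2.
Proof.
rewrite !big_ord_recl big_ord0 addr0 !addrA.
by congr (_ + _ + _); congr f; apply: val_inj.
Qed.

Definition lf (K : fieldType) (N : 'M[K]_3) (j : 'I_3) : {mpoly K[3]} :=
  \sum_(i < 3) N i j *: 'X_i.

Definition FF (K : fieldType) (N : 'M[K]_3) : {mpoly K[3]} :=
  4 *: (lf N i1 * lf N i1 * lf N i1) + 27 *: (lf N i0 * (lf N i2 * lf N i2)).

Definition crd (K : fieldType) (N : 'M[K]_3) (q : 'rV[K]_3) (j : 'I_3) : K :=
  (q *m N) 0 j.

Lemma ev_lf (K : fieldType) (N : 'M[K]_3) (q : 'rV[K]_3) j :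
  meval (fun i => q 0 i) (lf N j) = crd N q j.
Proof.
rewrite /lf /crd raddf_sum mxE; apply: eq_bigr => i _.
by rewrite /= mevalZ mevalXU mulrC.
Qed.

Lemma dX (K : fieldType) (i k : 'I_3) :
  ('X_k : {mpoly K[3]})^`M(i) = ((k == i)%:R)%:MP.
Proof.
rewrite mderivX mnm1E; case: eqP => [->|_].
  have -> : (U_(i) - U_(i))%MM = 0%MM.
    by apply/mnmP => j; rewrite mnmBE mnm0E subnn.
  by rewrite mpolyX0 scale1r.
by rewrite scale0r.
Qed.

Lemma dlf (K : fieldType) (N : 'M[K]_3) i j : (lf N j)^`M(i) = (N i j)%:MP.
Proof.
rewrite /lf raddf_sum (bigD1 i) //= big1 ?addr0.
  rewrite mderivZ dX eqxx; apply/mpolyP => m; by rewrite mcoeffZ !mcoeffC mul1r.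
by move=> k /negbTE kn; rewrite mderivZ dX kn scaler0.
Qed.

Lemma mevalM' (K : fieldType) (v : 'I_3 -> K) (p r : {mpoly K[3]}) :
  meval v (p * r) = meval v p * meval v r.
Proof. by rewrite rmorphM. Qed.

Lemma tt1 (K : fieldType) (a b c d e f : K) :
  4 * ((e * b + b * e) * b + b * b * e) + 27 * (d * (c * c) + a * (f * c + c * f)) =
  12 * b ^+ 2 * e + 27 * c ^+ 2 * d + 54 * a * c * f.
Proof. ring. Qed.

Lemma ev_F (K : fieldType) (N : 'M[K]_3) (q : 'rV[K]_3) :
  ev (FF N) q = 4 * crd N q i1 ^+ 3 + 27 * crd N q i0 * crd N q i2 ^+ 2.
Proof. rewrite /ev /FF !mevalD !mevalZ !rmorphM /= !ev_lf; ring. Qed.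

Lemma ev_dF (K : fieldType) (N : 'M[K]_3) (q : 'rV[K]_3) i :
  ev ((FF N)^`M(i)) q = 12 * crd N q i1 ^+ 2 * N i i1 + 27 * crd N q i2 ^+ 2 * N i i0
     + 54 * crd N q i0 * crd N q i2 * N i i2.
Proof.
rewrite /ev /FF !mderivD !mderivZ !mderivM !dlf.
rewrite !(mevalD, mevalZ, mevalC, ev_lf, mevalM'). move: (crd N q i0) (crd N q i1) (crd N q i2) (N i i0) (N i i1) (N i i2) => a b c d e f. ring.
Qed.

Lemma ev_ddF (K : fieldType) (N : 'M[K]_3) (q : 'rV[K]_3) i j :
  ev ((FF N)^`M(i))^`M(j) q = 24 * crd N q i1 * N i i1 * N j i1
     + 54 * crd N q i2 * (N i i0 * N j i2 + N i i2 * N j i0)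
     + 54 * crd N q i0 * N i i2 * N j i2.
Proof.
rewrite /ev /FF !(mderivD, mderivZ, mderivM, dlf, mderivC).
rewrite !(mevalD, mevalZ, mevalC, meval0, ev_lf, mevalM').
move: (crd N q i0) (crd N q i1) (crd N q i2) (N i i0) (N i i1) (N i i2)
  (N j i0) (N j i1) (N j i2) => a b c d e f g h k; ring.
Qed.

Lemma homog_F (K : fieldType) (N : 'M[K]_3) : FF N \is 3.-homog.
Proof.
have hl : forall j, lf N j \is 1.-homog.
  move=> j; apply: rpred_sum => k _; apply: rpredZ.
  by rewrite dhomogX /= mdeg1.
rewrite /FF; apply: rpredD; apply: rpredZ.
  by rewrite -[3%N]/(1 + 1 + 1)%N; apply: dhomogM; first apply: dhomogM.
by rewrite -[3%N]/(1 + (1 + 1))%N; apply: dhomogM => //; apply: dhomogM.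
Qed.

Lemma crdE (K : fieldType) (N : 'M[K]_3) (q : 'rV[K]_3) j :
  crd N q j = q 0 i0 * N i0 j + q 0 i1 * N i1 j + q 0 i2 * N i2 j.
Proof. by rewrite /crd mxE sum3. Qed.

Lemma dot_grad (K : fieldType) (N : 'M[K]_3) (q v : 'rV[K]_3) :
  dot3 (grad (FF N) q) v = 12 * crd N q i1 ^+ 2 * crd N v i1
    + 27 * crd N q i2 ^+ 2 * crd N v i0 + 54 * crd N q i0 * crd N q i2 * crd N v i2.
Proof.
rewrite /dot3 /grad mxE sum3 !mxE !ev_dF (crdE N v).
rewrite (crdE N v i0) (crdE N v i2).
move: (crd N q i0) (crd N q i1) (crd N q i2) => a b c.
move: (v 0 i0) (v 0 i1) (v 0 i2) => x y z.
move: (N i0 i0) (N i0 i1) (N i0 i2) (N i1 i0) (N i1 i1) (N i1 i2) (N i2 i0) (N i2 i1) (N i2 i2).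
move=> n00 n01 n02 n10 n11 n12 n20 n21 n22; ring.
Qed.

Lemma dot_hess (K : fieldType) (N : 'M[K]_3) (q v : 'rV[K]_3) :
  dot3 (v *m hessian (FF N) q) v = 24 * crd N q i1 * crd N v i1 ^+ 2
    + 108 * crd N q i2 * crd N v i0 * crd N v i2 + 54 * crd N q i0 * crd N v i2 ^+ 2.
Proof.
rewrite /dot3 /hessian mxE sum3 !mxE !sum3 !mxE !ev_ddF (crdE N v i1).
rewrite (crdE N v i0) (crdE N v i2).
move: (crd N q i0) (crd N q i1) (crd N q i2) => a b c.
move: (v 0 i0) (v 0 i1) (v 0 i2) => x y z.
move: (N i0 i0) (N i0 i1) (N i0 i2) (N i1 i0) (N i1 i1) (N i1 i2) (N i2 i0) (N i2 i1) (N i2 i2).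
move=> n00 n01 n02 n10 n11 n12 n20 n21 n22; ring.
Qed.

Definition row3 (K : nzRingType) (a b c : K) : 'rV[K]_3 := \row_(i < 3) [:: a; b; c]`_i.

Lemma ord3P (j : 'I_3) : j = i0 \/ j = i1 \/ j = i2.
Proof.
case: j => [[|[|[|//]]] hj].
- by left; apply: val_inj.
- by right; left; apply: val_inj.
- by right; right; apply: val_inj.
Qed.

Lemma row3E (K : nzRingType) (a b c : K) :
  [/\ row3 a b c 0 i0 = a, row3 a b c 0 i1 = b & row3 a b c 0 i2 = c].
Proof. by rewrite !mxE. Qed.

Lemma row3_crd (K : fieldType) (N : 'M[K]_3) (q : 'rV[K]_3) :
  q *m N = row3 (crd N q i0) (crd N q i1) (crd N q i2).
Proof.
apply/matrixP => i j; rewrite ord1.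
by case: (ord3P j) => [->|[->|->]]; rewrite [RHS]mxE.
Qed.

Lemma crdB (K : fieldType) (B N : 'M[K]_3) (hBN : B *m N = 1%:M) (w : 'rV[K]_3) j :
  crd N (w *m B) j = w 0 j.
Proof. by rewrite /crd -mulmxA hBN mulmx1. Qed.

Lemma coord_rec (K : fieldType) (B N : 'M[K]_3) (hNB : N *m B = 1%:M) (q : 'rV[K]_3) :
  q = row3 (crd N q i0) (crd N q i1) (crd N q i2) *m B.
Proof. by rewrite -row3_crd -mulmxA hNB mulmx1. Qed.

Lemma colN_neq0 (K : fieldType) (B N : 'M[K]_3) (hBN : B *m N = 1%:M) j :
  ~ (forall i, N i j = 0).
Proof.
move=> h; have := congr1 (fun M : 'M[K]_3 => M j j) hBN.
rewrite !mxE eqxx sum3 !h !mulr0 !addr0 => /eqP; rewrite eq_sym oner_eq0.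
by [].
Qed.

Lemma grad_eq0 (K : fieldType) (N : 'M[K]_3) (q : 'rV[K]_3) :
  grad (FF N) q = 0 <-> forall i, ev ((FF N)^`M(i)) q = 0.
Proof.
split.
  by move=> h i; have := congr1 (fun M : 'rV[K]_3 => M 0 i) h; rewrite !mxE.
by move=> h; apply/matrixP => i j; rewrite !mxE h.
Qed.

Lemma flex_p (K : fieldType) (hK : [pchar K] =i pred0) (B N : 'M[K]_3)
  (hBN : B *m N = 1%:M) : flex (FF N) (row3 0 0 1 *m B).
Proof.
have c0 : crd N (row3 0 0 1 *m B) i0 = 0 by rewrite (crdB hBN) mxE.
have c1 : crd N (row3 0 0 1 *m B) i1 = 0 by rewrite (crdB hBN) mxE.
have c2 : crd N (row3 0 0 1 *m B) i2 = 1 by rewrite (crdB hBN) mxE.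
have n27 : (27 : K) != 0 by apply: natK0.
split.
  apply/eqP => h; move: c2; rewrite h /crd mul0mx mxE => /eqP.
  by rewrite eq_sym oner_eq0.
split; first by rewrite ev_F c0 c1 c2; ring.
split.
  apply/eqP => /grad_eq0 h; apply: (colN_neq0 hBN (j := i0)) => i.
  have := h i; rewrite ev_dF c0 c1 c2 => /eqP.
  rewrite (_ : _ + _ = 27 * N i i0); last by ring.
  by rewrite mulf_eq0 (negbTE n27) => /eqP.
move=> v; rewrite dot_grad dot_hess c0 c1 c2 => hv.
have hU : crd N v i0 = 0.
  apply/eqP; move: hv => /eqP.
  rewrite (_ : _ + _ = 27 * crd N v i0); last by ring.
  by rewrite mulf_eq0 (negbTE n27).
by rewrite hU; ring.
Qed.

Lemma flex_uniq (K : fieldType) (hK : [pchar K] =i pred0) (B N : 'M[K]_3)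
  (hBN : B *m N = 1%:M) (hNB : N *m B = 1%:M) p' :
  flex (FF N) p' -> exists c : K, p' = c *: (row3 0 0 1 *m B).
Proof.
move=> [pn0 [hF [hg hfl]]].
move: hF hg hfl; rewrite ev_F.
set x := crd N p' i0; set y := crd N p' i1; set z := crd N p' i2.
move=> hF hg hfl.
have n4 : (4 : K) != 0 by apply: natK0.
have n24 : (24 : K) != 0 by apply: natK0.
have n162 : (162 : K) != 0 by apply: natK0.
have n27 : (27 : K) != 0 by apply: natK0.
have zn0 : z != 0.
  apply: contra hg => /eqP z0; apply/eqP/grad_eq0 => i.
  have y0 : y = 0.
    move: hF; rewrite z0 => /eqP; rewrite (_ : _ + _ = 4 * y ^+ 3); last by ring.
    by rewrite mulf_eq0 (negbTE n4) expf_eq0 /= => /eqP.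
  by rewrite ev_dF -/x -/y -/z y0 z0; ring.
have y0 : y = 0.
  pose v := row3 (- (12 * y ^+ 2) / (27 * z ^+ 2)) 1 0 *m B.
  have := hfl v; rewrite dot_grad dot_hess /v !(crdB hBN) !mxE /= -/x -/y -/z.
  move=> h; have : 24 * y = 0.
    rewrite -[RHS]h; first by field; rewrite n27 zn0.
    by field; rewrite n27 zn0.
  by move/eqP; rewrite mulf_eq0 (negbTE n24) => /eqP.
have x0 : x = 0.
  pose v := row3 (- (2 * x) / z) 0 1 *m B.
  have := hfl v; rewrite dot_grad dot_hess /v !(crdB hBN) !mxE /= -/x -/y -/z y0.
  move=> h; have : - (162 * x) = 0.
    rewrite -[RHS]h; first by field; rewrite zn0.
    by field; rewrite zn0.
  by move/eqP; rewrite oppr_eq0 mulf_eq0 (negbTE n162) => /eqP.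
exists z; rewrite (coord_rec hNB p') -/x -/y -/z x0 y0 scalemxAl; congr (_ *m _).
apply/matrixP => i j; rewrite ord1.
by case: (ord3P j) => [->|[->|->]]; rewrite !mxE /= ?mulr0 ?mulr1.
Qed.

Lemma cusp_pc (K : fieldType) (hK : [pchar K] =i pred0) (B N : 'M[K]_3)
  (hBN : B *m N = 1%:M) : cusp (FF N) (row3 1 0 0 *m B).
Proof.
have c0 : crd N (row3 1 0 0 *m B) i0 = 1 by rewrite (crdB hBN) mxE.
have c1 : crd N (row3 1 0 0 *m B) i1 = 0 by rewrite (crdB hBN) mxE.
have c2 : crd N (row3 1 0 0 *m B) i2 = 0 by rewrite (crdB hBN) mxE.
have n54 : (54 : K) != 0 by apply: natK0.
split.
  split.
    apply/eqP => h; move: c0; rewrite h /crd mul0mx mxE => /eqP.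
    by rewrite eq_sym oner_eq0.
  split; first by rewrite ev_F c0 c1 c2; ring.
  by apply/grad_eq0 => i; rewrite ev_dF c0 c1 c2; ring.
have hH : hessian (FF N) (row3 1 0 0 *m B) = col i2 N *m (54 *: (col i2 N)^T).
  apply/matrixP => i j; rewrite !mxE big_ord1 !mxE ev_ddF c0 c1 c2; ring.
rewrite hH; apply/eqP; rewrite eqn_leq; apply/andP; split.
  by apply: leq_trans (mxrankM_maxl _ _) (rank_leq_col _).
rewrite lt0n mxrank_eq0; apply/eqP => h0.
apply: (colN_neq0 hBN (j := i2)) => k.
have := congr1 (fun M : 'M[K]_3 => M k k) h0; rewrite !mxE big_ord1 !mxE => /eqP.
by rewrite mulrCA mulf_eq0 (negbTE n54) /= mulf_eq0 orbb => /eqP.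
Qed.

Lemma mdeg_cases (n : nat) (m : 'X_{1..n}) :
  m = 0%MM \/ (exists j, m = U_(j)%MM) \/ (2 <= mdeg m)%N.
Proof.
case: (ltngtP (mdeg m) 1) => h.
- left; apply/eqP; rewrite -mdeg_eq0; by move: h; case: (mdeg m).
- by right; right.
- by right; left; move/eqP/mdeg1P: h => [j /eqP ->]; exists j.
Qed.

Lemma affine_G (K : fieldType) (G : {mpoly K[3]}) : msize G = 2%N ->
  exists c (gc : 'cV[K]_3), gc != 0 /\ forall q, ev G q = c + (q *m gc) 0 0.
Proof.
move=> hs.
have hG : G = (G@_0%MM)%:MP + \sum_(i < 3) G@_U_(i) *: 'X_i.
  apply/mpolyP => m; rewrite mcoeffD mcoeffC raddf_sum /=.
  have hsum : forall m', \sum_(i < 3) (G@_U_(i) *: ('X_i : {mpoly K[3]}))@_m' =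
      \sum_(i < 3) G@_U_(i) * (U_(i)%MM == m')%:R.
    by move=> m'; apply: eq_bigr => i _; rewrite mcoeffZ mcoeffX.
  rewrite hsum.
  case: (mdeg_cases m) => [->|[[j ->]|h2]].
  - rewrite eqxx mulr1 big1 ?addr0 // => i _.
    by rewrite (@mnm1_eq0 3 i) mulr0.
  - rewrite (@mnm1_eq0 3 j) mulr0 add0r sum3.
    by case: (ord3P j) => [->|[->|->]]; rewrite !eq_mnm1 /= ?mulr0 ?mulr1 ?addr0 ?add0r.
  - rewrite memN_msupp_eq0; last by apply: msize_mdeg_ge; rewrite hs.
    have -> : (m == 0%MM) = false.
      by apply/negbTE/eqP => m0; move: h2; rewrite m0 mdeg0.
    rewrite mulr0 add0r big1 // => i _.
    have -> : (U_(i)%MM == m) = false.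
      by apply/negbTE/eqP => mi; move: h2; rewrite -mi mdeg1.
    by rewrite mulr0.
pose gc : 'cV[K]_3 := \col_i G@_U_(i).
exists (G@_0%MM), gc; split.
  apply/eqP => g0; move: hs; rewrite hG (_ : \sum_(i < 3) _ = 0).
    by rewrite addr0 msizeC; case: (_ == 0).
  apply: big1 => i _.
  have := congr1 (fun M : 'cV[K]_3 => M i 0) g0; rewrite !mxE => ->.
  by rewrite scale0r.
move=> q; rewrite /ev {1}hG mevalD mevalC raddf_sum /= mxE.
congr (_ + _); apply: eq_bigr => i _; rewrite mevalZ mevalXU mxE; exact: mulrC.
Qed.

Lemma nofac (K : fieldType) (hK : [pchar K] =i pred0) (B N : 'M[K]_3)
  (hBN : B *m N = 1%:M) (hNB : N *m B = 1%:M) (G H : {mpoly K[3]}) :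
  FF N = G * H -> msize G = 2%N -> False.
Proof.
move=> hGH hs.
have [c [gc [gcn0 evG]]] := affine_G hs.
pose hc := B *m gc.
have hcn0 : hc != 0.
  apply: contra gcn0 => /eqP h0; apply/eqP.
  by rewrite -[gc]mul1mx -hNB -mulmxA -/hc h0 mulmx0.
have evGw : forall w : 'rV[K]_3, ev G (w *m B) =
    c + (w 0 i0 * hc i0 0 + w 0 i1 * hc i1 0 + w 0 i2 * hc i2 0).
  by move=> w; rewrite evG -mulmxA mxE sum3.
clearbody hc.
have evFG : forall q, ev (FF N) q = ev G q * ev H q.
  by move=> q; rewrite /ev hGH mevalM'.
have evFw : forall a b d, ev (FF N) (row3 a b d *m B) = 4 * b ^+ 3 + 27 * a * d ^+ 2.
  by move=> a b d; rewrite ev_F !(crdB hBN) !mxE.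
have n4 : (4 : K) != 0 by apply: natK0.
have contr : forall a b d, ev G (row3 a b d *m B) = 0 ->
    4 * b ^+ 3 + 27 * a * d ^+ 2 = 0.
  by move=> a b d h; rewrite -evFw evFG h mul0r.
have n27 : (27 : K) != 0 by apply: natK0.
have [h0|h0] := eqVneq (hc i0 0) 0; last first.
  have := contr (- (c + hc i1 0) / hc i0 0) 1 0.
  rewrite evGw !mxE /=.
  have -> : c + (- (c + hc i1 0) / hc i0 0 * hc i0 0 + 1 * hc i1 0 + 0 * hc i2 0) = 0.
    by field; rewrite ?h0.
  move=> /(_ erefl) /eqP.
  rewrite (_ : _ + _ = 4); last by ring.
  by rewrite (negbTE n4).
have [h1|h1] := eqVneq (hc i1 0) 0; last first.
  pose y0 := - (c + hc i2 0) / hc i1 0.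
  have := contr ((1 - 4 * y0 ^+ 3) / 27) y0 1.
  rewrite evGw !mxE /= h0.
  have -> : c + ((1 - 4 * y0 ^+ 3) / 27 * 0 + y0 * hc i1 0 + 1 * hc i2 0) = 0.
    by rewrite /y0; field; rewrite ?h1.
  move=> /(_ erefl) /eqP.
  have -> : 4 * y0 ^+ 3 + 27 * ((1 - 4 * y0 ^+ 3) / 27) * 1 ^+ 2 = 1 by field; rewrite ?n27.
  by rewrite oner_eq0.
have [h2|h2] := eqVneq (hc i2 0) 0.
  move/eqP: hcn0; apply; apply/matrixP => i j; rewrite ord1 mxE.
  by case: (ord3P i) => [->|[->|->]].
have := contr 0 1 (- c / hc i2 0).
rewrite evGw !mxE /= h0 h1.
have -> : c + (0 * 0 + 1 * 0 + - c / hc i2 0 * hc i2 0) = 0 by field; rewrite ?h2.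
move=> /(_ erefl) /eqP.
rewrite (_ : _ + _ = 4); last by ring.
by rewrite (negbTE n4).
Qed.

Lemma cuspidal_F (K : fieldType) (hK : [pchar K] =i pred0) (B N : 'M[K]_3)
  (hBN : B *m N = 1%:M) (hNB : N *m B = 1%:M) : cuspidal_cubic (FF N).
Proof.
have n4 : (4 : K) != 0 by apply: natK0.
have Fn0 : FF N != 0.
  apply/eqP => F0; move: n4.
  have : ev (FF N) (row3 0 1 0 *m B) = 4.
    by rewrite ev_F !(crdB hBN) !mxE /=; ring.
  by rewrite F0 /ev meval0 => <-; rewrite eqxx.
have hsz : msize (FF N) = 4%N.
  have h1 := dhomog_msize (homog_F N).
  have := dhomog_uniq Fn0 h1 (homog_F N).
  have : msize (FF N) != 0%N by rewrite msize_poly_eq0.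
  by case: (msize (FF N)) => [|k] //= _ ->.
split; first exact: homog_F.
split; last by exists (row3 1 0 0 *m B); apply: cusp_pc.
split; first by rewrite hsz.
move=> G H hGH.
have Gn0 : G != 0 by apply: contra Fn0 => /eqP G0; rewrite hGH G0 mul0r.
have Hn0 : H != 0 by apply: contra Fn0 => /eqP H0; rewrite hGH H0 mulr0.
have := msizeM Gn0 Hn0; rewrite -hGH hsz => hsum.
case: (leqP (msize G) 1) => hG; first by left.
case: (leqP (msize H) 1) => hH; first by right.
exfalso.
have [e2|e2] : msize G = 2%N \/ msize H = 2%N.
  move: hsum hG hH; move: (msize G) (msize H) => a b; lia.
  exact: (nofac hK hBN hNB hGH).
by apply: (nofac hK hBN hNB (G := H) (H := G)); rewrite // mulrC.
Qed.

Lemma sum5 (R : nmodType) (f : 'I_5 -> R) :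
  \sum_(i < 5) f i = f j0 + f j1 + f j2 + f j3 + f j4.
Proof.
rewrite !big_ord_recl big_ord0 addr0 !addrA.
by congr (_ + _ + _ + _ + _); congr f; apply: val_inj.
Qed.

Lemma sum2 (R : nmodType) (f : 'I_2 -> R) : \sum_(i < 2) f i = f 0 + f 1.
Proof. by rewrite !big_ord_recl big_ord0 addr0; congr (_ + _); congr f; apply: val_inj. Qed.

Lemma ord5P (j : 'I_5) : j = j0 \/ j = j1 \/ j = j2 \/ j = j3 \/ j = j4.
Proof.
case: j => [[|[|[|[|[|//]]]]] hj].
- by left; apply: val_inj.
- by right; left; apply: val_inj.
- by right; right; left; apply: val_inj.
- by right; right; right; left; apply: val_inj.
- by right; right; right; right; apply: val_inj.
Qed.

Lemma ord2P (j : 'I_2) : j = 0 \/ j = 1.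
Proof. case: j => [[|[|//]] hj]; [left|right]; exact: val_inj. Qed.

Definition L0 (K : fieldType) : 'M[K]_(2,5) :=
  \matrix_(i < 2, j < 5) (if i == 0 then (j == j3)%:R else (j == j1)%:R - (j == j2)%:R).

Lemma DL0E (K : fieldType) (D : 'M[K]_(1,2)) :
  D *m L0 K = vec5 0 (D 0 1) (- D 0 1) (D 0 0) 0.
Proof.
apply/matrixP => i j; rewrite ord1 !mxE sum2 !mxE /=.
case: (ord5P j) => [->|[->|[->|[->|->]]]]; rewrite ?mxE /=; ring.
Qed.

Lemma rank_L0 (K : fieldType) : \rank (L0 K) = 2%N.
Proof.
pose C : 'M[K]_(5,2) := \matrix_(i, j) (if j == 0 then (i == j3)%:R else (i == j1)%:R).
have hC : L0 K *m C = 1%:M.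
  apply/matrixP => i j; rewrite !mxE sum5 !mxE.
  by case: (ord2P i) => ->; case: (ord2P j) => -> /=; ring.
apply/eqP; rewrite eqn_leq rank_leq_row /=.
by rewrite -{1}(mxrank1 K 2) -hC mxrankM_maxl.
Qed.

Lemma std_L0 (K : fieldType) (D : 'M[K]_(1,2)) : ~ std_scroll (D *m L0 K).
Proof.
rewrite DL0E => -[s [t [u [v [hst [huv he]]]]]].
have e := fun j => congr1 (fun M : 'rV[K]_5 => M 0 j) he.
have := e j0; have := e j1; have := e j2; have := e j3; have := e j4.
rewrite !mxE /= => e4 e3 e2 e1 e0.
have hsum : t * u + s ^+ 2 * v = 0 by rewrite -e1 -e2; ring.
have [s0|sn0] := eqVneq s 0.
  have tn0 : t != 0 by case: hst => // /negP; rewrite s0 eqxx.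
  have v0 : v = 0.
    by move/eqP: e4; rewrite eq_sym mulf_eq0 expf_eq0 (negbTE tn0) /= => /eqP.
  have u0 : u = 0.
    by move/eqP: hsum; rewrite s0 v0 mulr0 addr0 mulf_eq0 (negbTE tn0) => /eqP.
  by case: huv => /negP; rewrite ?u0 ?v0 eqxx.
have u0 : u = 0 by move/eqP: e0; rewrite eq_sym mulf_eq0 (negbTE sn0) => /eqP.
have v0 : v = 0.
  by move/eqP: hsum; rewrite u0 mulr0 add0r mulf_eq0 expf_eq0 (negbTE sn0) => /eqP.
by case: huv => /negP; rewrite ?u0 ?v0 eqxx.
Qed.

Definition BB (K : fieldType) (R : 'M[K]_(5,3)) : 'M[K]_3 :=
  \matrix_(i < 3, j < 3) [:: - R j4 j; R j1 j; - R j0 j]`_i.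

Lemma proj_setup (K : fieldType) (A : 'M[K]_5) (P : 'M[K]_(5,3))
  (Au : A \in unitmx) (hP : (kermx P == L0 K *m invmx A)%MS) :
  let R := invmx A *m P in
  [/\ (forall Y : 'rV[K]_5,
        Y *m R = row3 (- Y 0 j4) (Y 0 j1 + Y 0 j2) (- Y 0 j0) *m BB R),
      BB R \in unitmx &
      (forall x : 'rV[K]_5, x *m P = (x *m A) *m R)].
Proof.
move=> R.
have hPx : forall x : 'rV[K]_5, x *m P = (x *m A) *m R.
  by move=> x; rewrite /R mulmxA -(mulmxA x) mulmxV // mulmx1.
move/andP: hP => [hP1 hP2].
have hker : L0 K *m R = 0.
  by rewrite /R mulmxA; apply/sub_kermxP.
have heqR : invmx A *m P = R by [].
clearbody R.
have hR3 : forall j, R j3 j = 0.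
  move=> j; have := congr1 (fun M : 'M[K]_(2,3) => M 0 j) hker.
  by rewrite !mxE sum5 !mxE /= => <-; ring.
have hR2 : forall j, R j2 j = R j1 j.
  move=> j; have := congr1 (fun M : 'M[K]_(2,3) => M 1 j) hker.
  rewrite !mxE sum5 !mxE /= => h.
  have h' : R j1 j - R j2 j = 0 by rewrite -[RHS]h; ring.
  by apply/eqP; rewrite eq_sym -subr_eq0 h'.
have hinj : forall a b c : K, (forall j, a * R j0 j + b * R j1 j + c * R j4 j = 0) ->
    [/\ a = 0, b = 0 & c = 0].
  move=> a b c h.
  have hz : vec5 a b 0 0 c *m invmx A *m P = 0.
    rewrite -mulmxA heqR; apply/matrixP => i j; rewrite !mxE sum5 !mxE /=.
    by rewrite -[RHS](h j); ring.
  have : (vec5 a b 0 0 c *m invmx A <= L0 K *m invmx A)%MS.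
    by apply: submx_trans hP1; apply/sub_kermxP.
  case/submxP => D hD.
  have : vec5 a b 0 0 c = D *m L0 K.
    by rewrite -[LHS](mulmxKV Au) hD -!mulmxA (mulmxA _ _ A) mulmxKV // mulmxA.
  rewrite DL0E => he.
  have e := fun j => congr1 (fun M : 'rV[K]_5 => M 0 j) he.
  have := e j0; have := e j1; have := e j2; have := e j4.
  rewrite !mxE /= => e4 e2 e1 e0.
  split => //; rewrite e1; apply/eqP; rewrite -oppr_eq0 -e2 //.
have hYR : forall Y : 'rV[K]_5,
    Y *m R = row3 (- Y 0 j4) (Y 0 j1 + Y 0 j2) (- Y 0 j0) *m BB R.
  move=> Y; apply/matrixP => i j; rewrite ord1 !mxE sum5 sum3 !mxE /=.
  rewrite hR3 hR2; ring.
split => //.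
rewrite -row_free_unit -kermx_eq0; apply/eqP/row_matrixP => i; rewrite row0.
have hk : row i (kermx (BB R)) *m BB R = 0 by rewrite -row_mul mulmx_ker row0.
move: hk; move: (row i (kermx (BB R))) => w hw.
have [ha hb hc] : [/\ - w 0 i2 = 0, w 0 i1 = 0 & - w 0 i0 = 0].
  apply: hinj => j.
  have := congr1 (fun M : 'rV[K]_3 => M 0 j) hw; rewrite !mxE sum3 !mxE /= => <-.
  ring.
apply/matrixP => a b; rewrite ord1 !mxE.
case: (ord3P b) => [->|[->|->]].
- by apply/eqP; rewrite -oppr_eq0 hc.
- exact: hb.
- by apply/eqP; rewrite -oppr_eq0 ha.
Qed.

Unset Implicit Arguments.

Theorem proposition5p2 (K : closedFieldType) (hK : [pchar K] =i pred0)
    (S : 'rV[K]_5 -> Prop) (hS : smooth_cubic_scroll S) :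
  exists L : 'M[K]_(2,5), is_line L /\ line_disjoint L S /\
    forall P : 'M[K]_(5,3), projection_from L P ->
      exists (F : {mpoly K[3]}) (p : 'rV[K]_3),
        [/\ cuspidal_cubic F, flex F p,
            (forall p', flex F p' -> exists c : K, p' = c *: p) &
            (forall q : 'rV[K]_3, q != 0 ->
               (branch_point S P q <-> ev F q = 0 \/ dot3 (grad F p) q = 0))].
Proof.
case: hS => A [Au hA].
exists (L0 K *m invmx A); split.
  by rewrite /is_line mxrankMfree ?rank_L0 // row_free_unit unitmx_inv.
split.
  move=> x _ /submxP [D hx] /hA; rewrite hx -mulmxA mulmxKV //.
  exact: std_L0.
move=> P hP.
have [hYR Bu hPx] := proj_setup Au hP.
move: hYR Bu hPx; set R := invmx A *m P; set B := BB R => hYR Bu hPx.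
set N := invmx B.
have hBN : B *m N = 1%:M by rewrite /N mulmxV.
have hNB : N *m B = 1%:M by rewrite /N mulVmx.
exists (FF N), (row3 0 0 1 *m B); split.
- exact: (cuspidal_F hK hBN hNB).
- exact: (flex_p hK hBN).
- by move=> p'; apply: (flex_uniq hK hBN hNB).
move=> q qn0.
have fibE : forall Y, (std_scroll Y /\ Y *m R = q) <->
    fib (crd N q i0) (crd N q i1) (crd N q i2) Y.
  move=> Y; rewrite /fib hYR; split.
    move=> [hs he]; split => //.
    have : row3 (- Y 0 j4) (Y 0 j1 + Y 0 j2) (- Y 0 j0) = q *m N.
      by rewrite -he mulmxK.
    rewrite row3_crd => h.
    have e := fun j => congr1 (fun M : 'rV[K]_3 => M 0 j) h.
    by have := e i0; have := e i1; have := e i2; rewrite !mxE /= => -> -> ->.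
  move=> [hs [e0 [e1 e2]]]; split => //.
  by rewrite e0 e1 e2 -(coord_rec hNB q).
have hdot : dot3 (grad (FF N) (row3 0 0 1 *m B)) q = 27 * crd N q i0.
  rewrite dot_grad !(crdB hBN) !mxE /=.
  move: (crd N q i0) (crd N q i1) (crd N q i2) => a b c; ring.
rewrite ev_F hdot.
have inj : forall (M : 'M[K]_5) (a b : 'rV[K]_5), M \in unitmx ->
    a != b -> a *m M != b *m M.
  by move=> M a b Mu; apply: contra => /eqP /(can_inj (mulmxK Mu)) ->.
have hE : (exists x1 x2 x3 : 'rV[K]_5,
        [/\ S x1, S x2 & S x3] /\
        [/\ x1 *m P = q, x2 *m P = q & x3 *m P = q] /\
        [/\ x1 != x2, x1 != x3 & x2 != x3]) <->
    (exists Y1 Y2 Y3, [/\ fib (crd N q i0) (crd N q i1) (crd N q i2) Y1,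
        fib (crd N q i0) (crd N q i1) (crd N q i2) Y2 &
        fib (crd N q i0) (crd N q i1) (crd N q i2) Y3] /\
     [/\ Y1 != Y2, Y1 != Y3 & Y2 != Y3]).
  split.
    move=> [x1 [x2 [x3 [[s1 s2 s3] [[p1 p2 p3] [d12 d13 d23]]]]]].
    exists (x1 *m A), (x2 *m A), (x3 *m A); split.
      split; apply/fibE; (split; [exact/hA | by rewrite -hPx]).
    by split; [exact: inj Au d12 | exact: inj Au d13 | exact: inj Au d23].
  move=> [Y1 [Y2 [Y3 [[f1 f2 f3] [d12 d13 d23]]]]].
  move/fibE: f1 => [s1 p1]; move/fibE: f2 => [s2 p2]; move/fibE: f3 => [s3 p3].
  have Aiu : invmx A \in unitmx by rewrite unitmx_inv.
  exists (Y1 *m invmx A), (Y2 *m invmx A), (Y3 *m invmx A).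
  split; first by split; apply/hA; rewrite mulmxKV.
  split; first by split; rewrite hPx mulmxKV.
  by split; [exact: inj Aiu d12 | exact: inj Aiu d13 | exact: inj Aiu d23].
rewrite /branch_point hE core //.
have n27 : (27 : K) != 0 by apply: natK0.
split.
  move=> [_ h].
  have [x0|xn0] := eqVneq (crd N q i0) 0; first by right; rewrite x0 mulr0.
  by left; apply/eqP; apply: contraT => hF; case: h.
move=> h; split => // -[xn0 hF]; case: h => [/eqP|/eqP].
  by rewrite (negbTE hF).
by rewrite mulf_eq0 (negbTE n27) (negbTE xn0).
Qed.
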